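(* Let $X$ be a topological vector space over $\mathbb{K}$, let $M\subset X$, and let $\alpha\ge\aleph_0$ be a cardinal with $w(X)\le\alpha$. Then: (i) $M$ is pointwise $\alpha$-dense-lineable if and only if $M$ is $\alpha$-infinitely pointwise $\alpha$-dense-lineable; (ii) for every cardinal $\gamma<\alpha$, $M$ is $(\gamma,\alpha)$-dense-lineable if and only if $M$ is $\alpha$-infinitely $(\gamma,\alpha)$-dense-lineable.
   Context: The weight $w(X)$ is the smallest cardinality of a base for the topology of $X$. $M$ is $\gamma$-lineable if there is a linear subspace of dimension $\gamma$ contained in $M\cup\{0\}$. $M$ is pointwise $\alpha$-dense-lineable if for each $x\in M$ there is a dense linear subspace $Y$ of $X$ with $\dim(Y)=\alpha$ and $x\in Y\subset M\cup\{0\}$. $M$ is $\alpha$-infinitely pointwise $\alpha$-dense-lineable if for each $x\in M$ there is a family $\{Y_\kappa\}_{\kappa<\alpha}$ of dense $\alpha$-dimensional subspaces of $X$ with $x\in Y_\kappa\subset M\cup\{0\}$ for all $\kappa$ and $Y_{\kappa_1}\cap Y_{\kappa_2}=\mathrm{span}(x)$ for $\kappa_1\ne\kappa_2$. For $\gamma<\alpha$, $M$ is $(\gamma,\alpha)$-dense-lineable if $M$ is $\gamma$-lineable and for every $\gamma$-dimensional subspace $W\subset M\cup\{0\}$ there is a dense $\alpha$-dimensional subspace $Y$ of $X$ with $W\subset Y\subset M\cup\{0\}$. $M$ is $\alpha$-infinitely $(\gamma,\alpha)$-dense-lineable if $M$ is $\gamma$-lineable and for every $\gamma$-dimensional subspace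 $W\subset M\cup\{0\}$ there is a family $\{Y_\kappa\}_{\kappa<\alpha}$ of dense $\alpha$-dimensional subspaces of $X$ with $W\subset Y_\kappa\subset M\cup\{0\}$ for all $\kappa$ and $Y_{\kappa_1}\cap Y_{\kappa_2}=W$ for $\kappa_1\neq\kappa_2$. *)

(* Defs.v *)
From HB Require Import structures.
From mathcomp Require Import all_boot all_order all_algebra.
From mathcomp Require Import all_classical all_reals all_analysis.
From mathcomp Require Import complex.

Set Implicit Arguments.
Unset Strict Implicit.
Unset Printing Implicit Defensive.

Import Order.TTheory GRing.Theory Num.Theory.
Local Open Scope classical_set_scope.
Local Open Scope ring_scope.

Section LinearNotions.
Variables (K : numFieldType) (X : lmodType K).

Definition span (E : set X) : set X :=
  [set y | exists (s : seq X) (c : X -> K),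
     (forall e, e \in s -> E e) /\ y = \sum_(e <- s) c e *: e].

Definition lin_indep (E : set X) : Prop :=
  forall (s : seq X) (c : X -> K), uniq s -> (forall e, e \in s -> E e) ->
    \sum_(e <- s) c e *: e = 0 -> forall e, e \in s -> c e = 0.

Definition subspace (Y : set X) : Prop :=
  Y 0 /\ (forall y z, Y y -> Y z -> Y (y + z)) /\
  (forall (k : K) y, Y y -> Y (k *: y)).

Definition has_dim (Y : set X) {I : Type} (D : set I) : Prop :=
  exists E : set X, [/\ E `<=` Y, lin_indep E, span E = Y & (E #= D)%card].

Definition dim_subspace (Y : set X) {I : Type} (D : set I) : Prop :=
  subspace Y /\ has_dim Y D.
End LinearNotions.

(* Cardinals are represented by (the full set of) types. *)
Definition card_lt {I J : Type} (G : set I) (A : set J) : Prop :=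
  (G #<= A)%card /\ ~ (A #<= G)%card.

Section Lineability.
Variables (K : numFieldType) (X : topologicalLmodType K).

Definition weight_le {I : Type} (A : set I) : Prop :=
  exists B : set (set X), basis B /\ (B #<= A)%card.

Definition lineable (M : set X) {I : Type} (G : set I) : Prop :=
  exists W : set X, dim_subspace W G /\ W `<=` M `|` [set 0].

Definition pointwise_dense_lineable (M : set X) {I : Type} (A : set I) : Prop :=
  forall x, M x -> exists Y : set X,
    [/\ dense Y, dim_subspace Y A, Y x & Y `<=` M `|` [set 0]].

Definition inf_pointwise_dense_lineable (M : set X) {I : Type} (A : set I) : Prop :=
  forall x, M x -> exists Y : I -> set X,
    (forall k, A k -> [/\ dense (Y k), dim_subspace (Y k) A, Y k x &
                          Y k `<=` M `|` [set 0]]) /\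
    (forall k1 k2, A k1 -> A k2 -> k1 <> k2 -> Y k1 `&` Y k2 = span [set x]).

Definition dense_lineable2 (M : set X) {I J : Type} (G : set J) (A : set I) : Prop :=
  lineable M G /\
  forall W : set X, dim_subspace W G -> W `<=` M `|` [set 0] ->
    exists Y : set X, [/\ dense Y, dim_subspace Y A, W `<=` Y & Y `<=` M `|` [set 0]].

Definition inf_dense_lineable2 (M : set X) {I J : Type} (G : set J) (A : set I) : Prop :=
  lineable M G /\
  forall W : set X, dim_subspace W G -> W `<=` M `|` [set 0] ->
    exists Y : I -> set X,
      (forall k, A k -> [/\ dense (Y k), dim_subspace (Y k) A, W `<=` Y k &
                            Y k `<=` M `|` [set 0]]) /\
      (forall k1 k2, A k1 -> A k2 -> k1 <> k2 -> Y k1 `&` Y k2 = W).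
End Lineability.

Definition theorem3p3_over (K : numFieldType) : Prop :=
  forall (X : topologicalLmodType K) (M : set X) (I : Type),
    infinite_set [set: I] -> weight_le X [set: I] ->
    (pointwise_dense_lineable M [set: I] <-> inf_pointwise_dense_lineable M [set: I]) /\
    (forall (J : Type), card_lt [set: J] [set: I] ->
       (dense_lineable2 M [set: J] [set: I] <-> inf_dense_lineable2 M [set: J] [set: I])).

(* Main.v *)
From HB Require Import structures.
From mathcomp Require Import all_boot all_order all_algebra.
From mathcomp Require Import all_classical all_reals all_analysis.
From mathcomp Require Import complex.
Require Import Defs.
From mathcomp Require Import wochoice.

Set Implicit Arguments.
Unset Strict Implicit.
Unset Printing Implicit Defensive.

Import Order.TTheory GRing.Theory Num.Theory.
Local Open Scope classical_set_scope.



Definition tle (T U : Type) : Prop := exists f : T -> U, injective f.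

Lemma tle_refl T : tle T T.
Proof. by exists id. Qed.

Lemma tle_trans T U V : tle T U -> tle U V -> tle T V.
Proof. by move=> [f fi] [g gi]; exists (g \o f) => x y /gi /fi. Qed.

Lemma tleP T U : tle T U <-> ([set: T] #<= [set: U])%card.
Proof.
elim/Ppointed: U => U.
  split=> [[f _]|]; last first.
    rewrite card_le_emptyr => /eqP h.
    have nT : T -> False by move=> t; have : [set: T] t by []; rewrite h.
    by exists (fun t => False_rect _ (nT t)) => x; case: (nT x).
  rewrite card_le_emptyr; apply/eqP; apply/seteqP; split => // t.
  by case: (no (f t)).
split=> [[f fi]|].
  by apply/pcard_injP; exists f => x y _ _; apply: fi.
by move=> /pcard_injP [f fi]; exists f => x y; apply: fi; rewrite inE.
Qed.

Lemma tle_CB T U : tle T U -> tle U T -> exists f : T -> U, bijective f.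
Proof.
move=> /tleP h1 /tleP h2.
have /card_bijP [f [g fK gK]] := Cantor_Bernstein h1 h2.
pose inT (t : T) : [set: T] := SigSub (mem_set (I : [set: T] t)).
pose inU (u : U) : [set: U] := SigSub (mem_set (I : [set: U] u)).
exists (fun t => val (f (inT t))); exists (fun u => val (g (inU u))).
  move=> t; have -> : inU (val (f (inT t))) = f (inT t) by apply: val_inj.
  by rewrite fK.
move=> u; have -> : inT (val (g (inU u))) = g (inU u) by apply: val_inj.
by rewrite gK.
Qed.

Lemma tle_bij T U (f : T -> U) : bijective f -> tle T U /\ tle U T.
Proof.
case=> g fK gK; split; [exists f | exists g].
  exact: can_inj fK.
exact: can_inj gK.
Qed.

Lemma tle_total T U : tle T U \/ tle U T.
Proof.
pose P (G : set (T * U)) :=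
  (forall a b b', G (a, b) -> G (a, b') -> b = b') /\
  (forall a a' b, G (a, b) -> G (a', b) -> a = a').
have [G [[Gf Gi] Gmax]] : exists A, P A /\ forall B, A `<` B -> ~ P B.
  apply: Zorn_bigcup => F FP Ftot; split.
    move=> a b b' [G1 FG1 G1ab] [G2 FG2 G2ab'].
    have [G12|G21] := Ftot _ _ FG1 FG2.
      by apply: (proj1 (FP _ FG2)) (G12 _ G1ab) G2ab'.
    by apply: (proj1 (FP _ FG1)) G1ab (G21 _ G2ab').
  move=> a a' b [G1 FG1 G1ab] [G2 FG2 G2ab'].
  have [G12|G21] := Ftot _ _ FG1 FG2.
    by apply: (proj2 (FP _ FG2)) (G12 _ G1ab) G2ab'.
  by apply: (proj2 (FP _ FG1)) G1ab (G21 _ G2ab').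
have [dom|/existsNP [a0 na0]] := pselect (forall a, exists b, G (a, b)); last first.
  have [rng|/existsNP [b0 nb0]] := pselect (forall b, exists a, G (a, b)); last first.
    exfalso; apply: (Gmax (G `|` [set (a0, b0)])).
      split; first by move=> ?; left.
      move=> /(_ (a0, b0) (or_intror erefl)) h; apply: na0; by exists b0.
    split.
      move=> a b b' [Gab|/= [ea eb]] [Gab'|/= [ea' eb']].
      - exact: Gf Gab Gab'.
      - by exfalso; apply: na0; exists b; rewrite -ea'.
      - by exfalso; apply: na0; exists b'; rewrite -ea.
      - by rewrite eb eb'.
    move=> a a' b [Gab|/= [ea eb]] [Gab'|/= [ea' eb']].
    - exact: Gi Gab Gab'.
    - by exfalso; apply: nb0; exists a; rewrite -eb'.
    - by exfalso; apply: nb0; exists a'; rewrite -eb.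
    - by rewrite ea ea'.
  right; have [g hg] := choice rng; exists g => x y gxy.
  by apply: Gf (hg x) _; rewrite gxy.
left; have [f hf] := choice dom; exists f => x y fxy.
by apply: Gi (hf x) _; rewrite fxy.
Qed.

Lemma tle_sum A A' B B' : tle A A' -> tle B B' -> tle (A + B) (A' + B').
Proof.
move=> [f fi] [g gi].
exists (fun x => match x with inl a => inl (f a) | inr b => inr (g b) end).
by move=> [a|b] [a'|b'] //= [] => [/fi|/gi] ->.
Qed.

Lemma tle_prod A A' B B' : tle A A' -> tle B B' -> tle (A * B) (A' * B').
Proof.
move=> [f fi] [g gi]; exists (fun x => (f x.1, g x.2)).
by move=> [a b] [a' b'] /= [/fi -> /gi ->].
Qed.

Lemma tle_sumAA A : tle nat A -> tle (A + A) (A * A).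
Proof.
move=> [f fi].
exists (fun x => match x with inl a => (a, f 0%N) | inr a => (a, f 1%N) end).
move=> [a|a] [a'|a'] //= [->] // /fi //.
Qed.

Lemma tle_sub T (A B : set T) : A `<=` B -> tle A B.
Proof.
move=> AB; exists (fun x : A => SigSub (mem_set (AB _ (set_mem (valP x))))).
by move=> x y /(congr1 val) /= /val_inj.
Qed.

Lemma tle_subT T (A : set T) : tle A T.
Proof. by exists val => x y /val_inj. Qed.

Lemma tle_Tsub T : tle T [set: T].
Proof.
exists (fun t => SigSub (mem_set (I : [set: T] t))).
by move=> x y /(congr1 val).
Qed.

Lemma tle_union T (A B : set T) : tle (A `|` B) (A + B)%type.
Proof.
pose f (x : A `|` B) : (A + B)%type :=
  match pselect (A (val x)) with
  | left h => inl (SigSub (mem_set h))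
  | right h => inr (SigSub (mem_set (match set_mem (valP x) with
               | or_introl h' => False_ind _ (h h') | or_intror h' => h' end)))
  end.
exists f => x y; rewrite /f.
case: pselect => hx; case: pselect => hy //= [] e; apply: val_inj;
  exact: e.
Qed.

Lemma tle_nat2 : tle (nat * nat) nat.
Proof.
by apply/tleP; have := card_nat2; rewrite card_eq_le => /andP[].
Qed.

Lemma tle_setX T U (A : set T) (B : set U) : tle (A `*` B) (A * B)%type.
Proof.
pose f (x : A `*` B) : (A * B)%type :=
  (SigSub (mem_set (proj1 (set_mem (valP x)))),
   SigSub (mem_set (proj2 (set_mem (valP x))))).
exists f => x y [] e1 e2; apply: val_inj.
by case: x y e1 e2 => [[a b] ?] [[a' b'] ?] /= -> ->.
Qed.

Lemma tle_img T U (A : set T) (k : A -> U) : injective k ->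
  tle (range k) A /\ tle A (range k).
Proof.
move=> ki; split.
  have : forall y : range k, exists s, k s = val y.
    by move=> [y /= /set_mem [s _ e]]; exists s.
  move=> /choice [g hg]; exists g => y y' e.
  by apply: val_inj; rewrite -hg -hg e.
exists (fun s => SigSub (mem_set (ex_intro2 _ _ s I erefl : range k (k s)))).
by move=> x y /(congr1 val) /ki.
Qed.


Lemma hessenberg T : tle nat T -> tle (T * T) T.
Proof.
move=> [n0 n0i].
have [b0 [b0i b0K b0K']] : exists b : nat * nat -> nat, bijective b.
  apply: tle_CB; first exact: tle_nat2.
  by exists (fun n => (n, 0%N)) => x y [].
pose N0 := range n0.
pose SG (G : set ((T * T) * T)) y := exists p, G (p, y).
pose P G := [/\ (forall p y y', G (p, y) -> G (p, y') -> y = y'),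
   (forall p p' y, G (p, y) -> G (p', y) -> p = p'),
   (forall a b, (exists y, G ((a, b), y)) <-> SG G a /\ SG G b) &
   (G = set0 \/ N0 `<=` SG G)].
have [G [[Gf Gi Gd GN] Gmax]] : exists A, P A /\ forall B, A `<` B -> ~ P B.
  apply: Zorn_bigcup => F FP Ftot.
  have SGsub G1 G2 : G1 `<=` G2 -> SG G1 `<=` SG G2.
    by move=> h y [p /h Gp]; exists p.
  split.
  - move=> p y y' [G1 FG1 G1ab] [G2 FG2 G2ab'].
    have [G12|G21] := Ftot _ _ FG1 FG2.
      by case: (FP _ FG2) => h _ _ _; apply: h (G12 _ G1ab) G2ab'.
    by case: (FP _ FG1) => h _ _ _; apply: h G1ab (G21 _ G2ab').
  - move=> p p' y [G1 FG1 G1ab] [G2 FG2 G2ab'].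
    have [G12|G21] := Ftot _ _ FG1 FG2.
      by case: (FP _ FG2) => _ h _ _; apply: h (G12 _ G1ab) G2ab'.
    by case: (FP _ FG1) => _ h _ _; apply: h G1ab (G21 _ G2ab').
  - move=> a b; split.
      move=> [y [G1 FG1 G1y]]; case: (FP _ FG1) => _ _ h _.
      have [[p1 h1] [p2 h2]] : SG G1 a /\ SG G1 b by apply/h; exists y.
      by split; [exists p1; exists G1|exists p2; exists G1].
    move=> [[p1 [G1 FG1 h1]] [p2 [G2 FG2 h2]]].
    have [G12|G21] := Ftot _ _ FG1 FG2.
      case: (FP _ FG2) => _ _ h _.
      have [y Gy] : exists y, G2 ((a, b), y).
        by apply/h; split; [exists p1; apply: G12|exists p2].
      by exists y; exists G2.
    case: (FP _ FG1) => _ _ h _.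
    have [y Gy] : exists y, G1 ((a, b), y).
      by apply/h; split; [exists p1|exists p2; apply: G21].
    by exists y; exists G1.
  - have [[G1 [FG1 h]]|nG] := pselect (exists G1, F G1 /\ N0 `<=` SG G1).
      right; apply: subset_trans h _; apply: SGsub => q Gq; by exists G1.
    left; apply/seteqP; split => // q [G1 FG1 G1q].
    case: (FP _ FG1) => _ _ _ [E|h].
      by move: G1q; rewrite E.
    by apply: nG; exists G1.
have GN0 : N0 `<=` SG G.
  case: GN => // G0E; exfalso.
  pose G0 (q : (T * T) * T) := exists a b, q = ((n0 a, n0 b), n0 (b0 (a, b))).
  have SG0 y : SG G0 y <-> N0 y.
    split; first by move=> [p [a [b [_ ->]]]]; exists (b0 (a, b)).
    move=> [n _ <-]; exists (n0 (b0i n).1, n0 (b0i n).2).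
    by exists (b0i n).1, (b0i n).2; rewrite -surjective_pairing b0K'.
  apply: (Gmax G0); first split.
  - by rewrite G0E.
  - rewrite G0E => /(_ ((n0 0, n0 0), n0 (b0 (0, 0))%N)); apply.
    by exists 0%N, 0%N.
  split.
  - move=> p y y' [a [b [-> ->]]] [a' [b' [[/n0i -> /n0i ->] ->]]] //.
  - move=> p p' y [a [b [-> ->]]] [a' [b' [-> /n0i /(can_inj b0K) [-> ->]]]] //.
  - move=> a b; split.
      by move=> [y [a' [b' [[-> ->] _]]]]; split; apply/SG0; eexists.
    move=> [/SG0 [a' _ <-] /SG0 [b' _ <-]].
    by exists (n0 (b0 (a', b'))); exists a', b'.
  - by right => y /SG0.
pose S : set T := SG G.
have hN : tle nat S.
  exists (fun n => SigSub (mem_set (GN0 _ (ex_intro2 _ _ n I erefl)))).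
  by move=> x y /(congr1 val) /n0i.
have hS : tle (S * S) S.
  have : forall p : (S * S)%type, exists y : S, G ((val p.1, val p.2), val y).
    move=> [a b]; have [|y Gy] := (proj2 (Gd (val a) (val b))).
      by split; apply: set_mem (valP _).
    have Sy : S y by exists (val a, val b).
    by exists (SigSub (mem_set Sy)).
  move=> /choice [h hh]; exists h => p p' e.
  have := hh p'; rewrite -e => /(Gi _ _ _ (hh p)) [e1 e2].
  by case: p p' e1 e2 {e} => [a b] [a' b'] /= /val_inj -> /val_inj ->.
have hSS : tle (S + S) S := tle_trans (tle_sumAA hN) hS.
have nSC : ~ tle S (~` S).
  move=> [k ki].
  pose k' (s : S) : T := val (k s).
  have k'i : injective k' by move=> x y /val_inj /ki.
  pose S' : set T := range k'.
  have [hS'S hSS'] := tle_img k'i.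
  have S'nS y : S' y -> ~ S y.
    by move=> [s _ <-]; have := set_mem (valP (k s)).
  pose Q : set (T * T) := fun p =>
    [/\ S p.1 \/ S' p.1, S p.2 \/ S' p.2 & ~ (S p.1 /\ S p.2)].
  have hQ1 : tle Q S'.
    apply: (tle_trans (tle_sub (B := (S `|` S') `*` (S `|` S')) _)).
      by move=> p [? ? _].
    apply: (tle_trans (tle_setX _ _)).
    apply: (tle_trans (tle_prod (tle_union S S') (tle_union S S'))).
    have h2 : tle (S + S') (S + S) := tle_sum (tle_refl _) hS'S.
    apply: (tle_trans (tle_prod h2 h2)).
    apply: (tle_trans (tle_prod hSS hSS)).
    exact: (tle_trans hS hSS').
  have hQ2 : tle S' Q.
    have QP (y : S') : Q (val y, val y).
      have := set_mem (valP y) => Sy.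
      by split => //=; [right|right|move=> [/(S'nS _ Sy)]].
    exists (fun y => SigSub (mem_set (QP y))).
    by move=> x y /(congr1 val) [] /val_inj.
  have [beta [betai bK bK']] := tle_CB hQ1 hQ2.
  pose G' (q : (T * T) * T) :=
    G q \/ exists r : Q, val r = q.1 /\ val (beta r) = q.2.
  have SG' y : SG G' y <-> S y \/ S' y.
    split.
      move=> [p [Gp|[r [_ /= ry]]]]; first by left; exists p.
      by right; rewrite -ry; apply: set_mem (valP (beta r)).
    move=> [[p Gp]|S'y]; first by exists p; left.
    exists (val (betai (SigSub (mem_set S'y)))); right.
    by exists (betai (SigSub (mem_set S'y))); rewrite bK'.
  apply: (Gmax G').
    split; first by move=> q Gq; left.
    have [s0 _] := hN.
    move=> sub; have s0' : S (val (s0 0%N)) by apply: set_mem (valP _).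
    pose s1 : S := s0 0%N.
    have S'y : S' (k' s1) by exists s1.
    pose r := betai (SigSub (mem_set S'y)).
    have : G' (val r, k' s1) by right; exists r; rewrite bK'.
    move=> /sub Gr; apply: (S'nS _ S'y); by exists (val r).
  split.
  - move=> [a b] y y' [Gy|[r [/= rp /= ry]]] [Gy'|[r' [/= rp' /= ry']]].
    + exact: Gf Gy Gy'.
    + have hab : SG G a /\ SG G b by apply/Gd; exists y.
      have : Q (a, b) by rewrite -rp'; apply: set_mem (valP r').
      by move=> [_ _ h]; exfalso; apply: h.
    + have hab : SG G a /\ SG G b by apply/Gd; exists y'.
      have : Q (a, b) by rewrite -rp; apply: set_mem (valP r).
      by move=> [_ _ h]; exfalso; apply: h.
    + have e : r = r' by apply: val_inj; exact: (etrans rp (esym rp')).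
      by rewrite /= -ry -ry' e.
  - move=> p p' y [Gy|[r [/= rp /= ry]]] [Gy'|[r' [/= rp' /= ry']]].
    + exact: Gi Gy Gy'.
    + exfalso; apply: (S'nS y); last by exists p.
      by rewrite -ry'; apply: set_mem (valP _).
    + exfalso; apply: (S'nS y); last by exists p'.
      by rewrite -ry; apply: set_mem (valP _).
    + have e : beta r = beta r' by apply: val_inj; exact: (etrans ry (esym ry')).
      by rewrite -rp -rp' (can_inj bK e).
  - move=> a b; split.
      move=> [y [Gy|[r [/= rp /= ry]]]].
        have [? ?] : SG G a /\ SG G b by apply/Gd; exists y.
        by split; apply/SG'; left.
      have : Q (a, b) by rewrite -rp; apply: set_mem (valP r).
      move=> [ha hb _].
      by split; apply/SG'.
    move=> [/SG' ha /SG' hb].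
    have [sab|nsab] := pselect (S a /\ S b).
      have [y Gy] := proj2 (Gd a b) sab.
      by exists y; left.
    have HQ : Q (a, b) by split.
    exists (val (beta (SigSub (mem_set HQ)))); right.
    by exists (SigSub (mem_set HQ)).
  - by right => y /GN0 Sy; apply/SG'; left.
have hCS : tle (~` S) S by case: (tle_total S (~` S)).
have hTS : tle T S.
  apply: (tle_trans (tle_Tsub T)).
  apply: (tle_trans (tle_sub (B := S `|` ~` S) _)).
    by move=> x _; apply: lem.
  apply: (tle_trans (tle_union _ _)).
  exact: (tle_trans (tle_sum (tle_refl _) hCS) hSS).
apply: (tle_trans (tle_prod hTS hTS)).
exact: (tle_trans hS (tle_subT _)).
Qed.



Lemma tle_setP U T (A : set T) : tle U A <-> ([set: U] #<= A)%card.
Proof.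
by rewrite tleP (card_le_eqr (card_setT A)).
Qed.

Lemma tle_set2 T U (A : set T) (B : set U) : tle A B <-> (A #<= B)%card.
Proof. by rewrite tleP (card_le_eqr (card_setT B)) (card_le_eql (card_setT A)). Qed.

Lemma tle_natP T : tle nat T <-> infinite_set [set: T].
Proof. by rewrite tleP infiniteP. Qed.

Lemma tle_nat_sum A B : tle nat (A + B) -> tle nat A \/ tle nat B.
Proof.
rewrite !tle_natP => hAB; apply: contrapT => /not_orP [/contrapT fA /contrapT fB].
apply: hAB.
have -> : [set: A + B] = (inl @` [set: A]) `|` (inr @` [set: B]).
  by apply/seteqP; split => // -[a|b] _; [left; exists a|right; exists b].
by rewrite finite_setU; split; apply: finite_image.
Qed.

Lemma key_small (X : eqType) (I A B : Type) (E S S1 S2 : set X) (F : X -> seq X) :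
  tle nat I -> ~ tle I A -> ~ tle I B -> tle S1 A -> tle S2 B ->
  S `<=` S1 `|` S2 -> tle I E -> E `<=` \bigcup_(s in S) [set` F s] -> False.
Proof.
move=> hI nA nB h1 h2 SS hE EF.
have [Sinf|Sfin] := pselect (tle nat S); last first.
  have fS : finite_set S.
    by apply: contrapT => /infiniteP /tle_setP.
  have fE : finite_set E.
    by apply: sub_finite_set EF _; apply: bigcup_finite.
  have : tle nat E := tle_trans hI hE.
  by move=> /tle_setP /infiniteP.
have hES : tle E (S * nat).
  have : forall e : E, exists s : S, val e \in F (val s).
    move=> e; have [s Ss Fs] := EF _ (set_mem (valP e)).
    by exists (SigSub (mem_set Ss)).
  move=> /choice [g hg]; exists (fun e => (g e, index (val e) (F (val (g e))))).
  move=> e e' [ge ie]; apply: val_inj.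
  have := nth_index (val e) (hg e); have := nth_index (val e) (hg e').
  by rewrite -ie -ge => -> ->.
have hSnS : tle (S * nat) (S * S) := tle_prod (tle_refl _) Sinf.
have hS2 : tle (S * S) S := hessenberg Sinf.
have hSAB : tle S (A + B).
  apply: (tle_trans (tle_sub SS)).
  exact: (tle_trans (tle_union _ _) (tle_sum h1 h2)).
have hIAB : tle I (A + B).
  exact: (tle_trans hE (tle_trans hES (tle_trans hSnS (tle_trans hS2 hSAB)))).
have hnAB : tle nat (A + B) := tle_trans Sinf hSAB.
have gen C : tle A C -> tle B C -> tle nat C -> tle I C.
  move=> AC BC nC; apply: (tle_trans hIAB).
  apply: (tle_trans (tle_sum AC BC)).
  exact: (tle_trans (tle_sumAA nC) (hessenberg nC)).
case: (tle_total A B) => [AB|BA].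
  apply: nB; apply: gen => //; first exact: tle_refl.
  by case: (tle_nat_sum hnAB) => // /tle_trans; apply.
apply: nA; apply: gen => //; first exact: tle_refl.
by case: (tle_nat_sum hnAB) => // /tle_trans; apply.
Qed.



Lemma wo_exists (T : Type) : exists R : T -> T -> Prop,
  [/\ (forall x y, R x y \/ R y x), (forall x y, R x y -> R y x -> x = y),
      (forall x y z, R x y -> R y z -> R x z) &
      (forall A : set T, A !=set0 -> exists2 m, A m & forall a, A a -> R m a)].
Proof.
have [R Rwo] := well_ordering_principle {classic T}.
have minP (A : set T) : A !=set0 -> exists2 m, A m & forall a, A a -> R m a.
  move=> [x Ax].
  have [|m [[mA lbm] _]] := Rwo [pred y : {classic T} | `[< A y >]].
    by exists x; rewrite inE.
  exists m; first by move: mA; rewrite inE.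
  by move=> a Aa; apply: lbm; rewrite inE.
have Rtot x y : R x y \/ R y x.
  have [m xy H] := minP [set x; y] (ex_intro _ x (or_introl erefl)).
  by case: xy => <-; [left; apply: H; right|right; apply: H; left].
have Ranti x y : R x y -> R y x -> x = y.
  move=> xy yx.
  have [|z [[zA lbz] uz]] := Rwo [pred w : {classic T} | (w == x) || (w == y)].
    by exists x; rewrite inE eqxx.
  have ex : z = x.
    apply: uz; split; first by rewrite inE eqxx.
    by move=> w; rewrite inE => /orP [/eqP ->|/eqP ->] //; case: (Rtot x x).
  have ey : z = y.
    apply: uz; split; first by rewrite inE eqxx orbT.
    by move=> w; rewrite inE => /orP [/eqP ->|/eqP ->] //; case: (Rtot y y).
  by rewrite -ex -ey.
exists R; split => //.
  move=> x y z xy yz.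
  have hne : [set x; y; z] !=set0 by exists x; left; left.
  have [m [[mx|my]|mz] H] := minP _ hne.
  - by rewrite -mx; apply: H; right.
  - have e : x = y by apply: Ranti => //; rewrite -my; apply: H; left; left.
    by rewrite e.
  - have e : y = z by apply: Ranti => //; rewrite -mz; apply: H; left; right.
    by rewrite -e.
Qed.

Lemma good_order (I : Type) : exists (R : I -> I -> Prop) (D : set I),
  [/\ (forall x y, R x y \/ R y x), (forall x y, R x y -> R y x -> x = y),
      (forall A : set I, A !=set0 -> exists2 m, A m & forall a, A a -> R m a),
      tle I D &
      (forall q, D q -> ~ tle I [set x | R x q /\ x <> q]) /\
      (forall q x, D q -> R x q -> D x)].
Proof.
have [R [Rtot Ranti Rtr Rmin]] := wo_exists I.
pose seg q := [set x | R x q /\ x <> q].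
have [hB|nB] := pselect (exists m, tle I (seg m)).
  have [m0 Bm0 m0min] := Rmin [set m | tle I (seg m)] hB.
  exists R, (seg m0); split => //; split.
    move=> q [qm qne] Bq; apply: qne; apply: Ranti => //.
    exact: m0min.
  move=> q x [qm qne] xq; split; first exact: Rtr xq qm.
  by move=> xm; apply: qne; apply: Ranti => //; rewrite -xm.
exists R, setT; split => //; first exact: tle_Tsub.
by split => // q _ h; apply: nB; exists q.
Qed.


Local Open Scope ring_scope.

Lemma sum_count (V : nmodType) (T : eqType) (s u : seq T) (F : T -> V) :
  uniq u -> {subset s <= u} ->
  \sum_(e <- s) F e = \sum_(e <- u) F e *+ count_mem e s.
Proof.
elim: s => [|x s IH] hu hs.
  by rewrite big_nil; symmetry; apply: big1 => e _; rewrite mulr0n.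
rewrite big_cons IH //; last by move=> e es; apply: hs; rewrite inE es orbT.
under [RHS]eq_bigr => e _ do rewrite /= mulrnDr.
rewrite big_split /=; congr (_ + _).
have xu : x \in u by apply: hs; rewrite inE eqxx.
rewrite (bigD1_seq x) //= eqxx mulr1n big1 ?addr0 // => e /negbTE.
by rewrite eq_sym => ->; rewrite mulr0n.
Qed.

Section Lin.
Variables (K : numFieldType) (X : lmodType K).
Implicit Types (E A B C : set X).

Lemma span_rep E y : span E y -> exists s (c : X -> K),
  (forall e, e \in s -> E e) /\ forall u, uniq u -> {subset s <= u} ->
  y = \sum_(e <- u) (c e *+ count_mem e s) *: e.
Proof.
move=> [s [c [sE ->]]]; exists s, c; split => // u uu su.
rewrite (sum_count _ uu su); apply: eq_bigr => e _; by rewrite scalerMnl.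
Qed.

Lemma span0 E : span E 0.
Proof. by exists [::], (fun _ => 0); split => //; rewrite big_nil. Qed.

Lemma span_sub E : E `<=` span E.
Proof.
move=> e Ee; exists [:: e], (fun _ => 1); split.
  by move=> x; rewrite inE => /eqP ->.
by rewrite big_cons big_nil addr0 scale1r.
Qed.

Lemma spanD E y z : span E y -> span E z -> span E (y + z).
Proof.
move=> /span_rep [s [c [sE hy]]] /span_rep [t [d [tE hz]]].
pose u := undup (s ++ t).
have uu : uniq u by apply: undup_uniq.
have su : {subset s <= u} by move=> e es; rewrite mem_undup mem_cat es.
have tu : {subset t <= u} by move=> e es; rewrite mem_undup mem_cat es orbT.
exists u, (fun e => c e *+ count_mem e s + d e *+ count_mem e t); split.
  by move=> e; rewrite mem_undup mem_cat => /orP [/sE|/tE].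
rewrite (hy u uu su) (hz u uu tu) -big_split /=.
by apply: eq_bigr => e _; rewrite scalerDl.
Qed.

Lemma spanZ E (k : K) y : span E y -> span E (k *: y).
Proof.
move=> [s [c [sE ->]]]; exists s, (fun e => k * c e); split => //.
by rewrite scaler_sumr; apply: eq_bigr => e _; rewrite scalerA.
Qed.

Lemma subspace_span E : subspace (span E).
Proof. split; first exact: span0. split; [exact: spanD|exact: spanZ]. Qed.

Lemma span_min E (Z : set X) : subspace Z -> E `<=` Z -> span E `<=` Z.
Proof.
move=> [Z0 [ZD ZZ]] EZ y [s [c [sE ->]]].
elim: s sE => [|x s IH] sE; first by rewrite big_nil.
rewrite big_cons; apply: ZD.
  by apply: ZZ; apply: EZ; apply: sE; rewrite inE eqxx.
by apply: IH => e es; apply: sE; rewrite inE es orbT.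
Qed.

Lemma span_mono A B : A `<=` B -> span A `<=` span B.
Proof.
move=> AB; apply: span_min; first exact: subspace_span.
by move=> e /AB; apply: span_sub.
Qed.

Lemma span_set0 : span (@set0 X) = [set 0].
Proof.
apply/seteqP; split; last by move=> _ ->; apply: span0.
move=> y [[|x s] [c [sE ->]]]; first by rewrite big_nil.
by case: (sE x); rewrite inE eqxx.
Qed.

Lemma lin_indep_sub A B : A `<=` B -> lin_indep B -> lin_indep A.
Proof. by move=> AB hB s c us sA; apply: hB => // e /sA /AB. Qed.

Lemma lin_indep_n0 E : lin_indep E -> ~ E 0.
Proof.
move=> hE E0.
have s0 : forall e, e \in [:: (0 : X)] -> E e by move=> e; rewrite inE => /eqP ->.
have := hE [:: 0] (fun _ => 1) isT s0.
rewrite big_cons big_nil addr0 scaler0 => /(_ erefl 0).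
by rewrite inE eqxx => /(_ isT) /eqP; rewrite oner_eq0.
Qed.
Lemma lin_int C A B : lin_indep C -> A `<=` C -> B `<=` C ->
  span A `&` span B `<=` span (A `&` B).
Proof.
move=> hC AC BC y [/span_rep [s [c [sA hy]]] /span_rep [t [d [tB hz]]]].
pose u := undup (s ++ t).
have uu : uniq u by apply: undup_uniq.
have su : {subset s <= u} by move=> e es; rewrite mem_undup mem_cat es.
have tu : {subset t <= u} by move=> e es; rewrite mem_undup mem_cat es orbT.
have eq1 := hy u uu su; have eq2 := hz u uu tu.
have h0 : \sum_(e <- u) ((c e *+ count_mem e s) - (d e *+ count_mem e t)) *: e = 0.
  rewrite (eq_bigr (fun e => (c e *+ count_mem e s) *: e
     - (d e *+ count_mem e t) *: e)); last by move=> e _; rewrite scalerBl.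
  by rewrite sumrB -eq1 -eq2 subrr.
have uC : forall e, e \in u -> C e.
  by move=> e; rewrite mem_undup mem_cat => /orP [/sA/AC|/tB/BC].
have hcd e : e \in u -> c e *+ count_mem e s = d e *+ count_mem e t.
  move=> eu; apply/eqP; rewrite -subr_eq0; apply/eqP.
  exact: (hC u _ uu uC h0 e eu).
exists (seq.filter (fun e => (e \in s) && (e \in t)) u),
  (fun e => c e *+ count_mem e s); split.
  by move=> e; rewrite mem_filter => /andP [/andP [/sA ? /tB ?] _]; split.
rewrite eq1 big_filter [RHS]big_mkcond; apply: eq_big_seq => e eu /=.
case: ifP => // /negbT; rewrite negb_and => /orP [es|et].
  by rewrite (count_memPn es) mulr0n scale0r.
by rewrite hcd // (count_memPn et) mulr0n scale0r.
Qed.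

Lemma lin_add C v : lin_indep C -> ~ span C v -> lin_indep (C `|` [set v]).
Proof.
move=> hC nv s c us sC.
have [vs|vs] := boolP (v \in s); last first.
  move=> h0; apply: hC => // e es.
  by case: (sC e es) => // ev; move: vs; rewrite -ev es.
rewrite (bigD1_seq v) //= -big_filter.
set w := seq.filter _ s.
have wC : forall e, e \in w -> C e.
  move=> e; rewrite mem_filter => /andP [/eqP nev es].
  by case: (sC e es).
have uw : uniq w by apply: filter_uniq.
move=> h0.
have cv : c v = 0.
  apply/eqP; apply/negPn/negP => cv0; apply: nv.
  exists w, (fun e => - (c v)^-1 * c e); split => //.
  have : \sum_(e <- w) c e *: e = - (c v *: v).
    by apply/eqP; rewrite -addr_eq0 addrC h0.
  move=> hw; rewrite -[LHS]scale1r -(mulVf cv0) -scalerA.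
  under eq_bigr do rewrite -scalerA.
  by rewrite -scaler_sumr hw scalerN scaleNr opprK.
move: h0; rewrite cv scale0r add0r => hw e es.
have [->|nev] := eqVneq e v; first by [].
by apply: (hC w c uw wC hw); rewrite mem_filter nev.
Qed.

Lemma notin_span E (F : set X) e : lin_indep E -> F `<=` E -> E e -> ~ F e ->
  ~ span F e.
Proof.
move=> hE FE Ee nFe sFe.
have : (span [set e] `&` span F) e by split => //; apply: span_sub.
have sE : [set e] `<=` E by move=> x ->.
move=> /(lin_int hE sE FE) [t] [c [tE ee]]; apply: (lin_indep_n0 hE); suff <- : e = 0 by [].
rewrite ee; case: t tE {ee} => [|x t] tE; first by rewrite big_nil.
by case: (tE x); rewrite ?inE ?eqxx // => -> /nFe.
Qed.
Lemma basis_cover E (S : set X) : lin_indep E -> S `<=` span E ->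
  E `<=` span S -> exists F : X -> seq X,
  (forall s, S s -> forall e, e \in F s -> E e) /\
  E `<=` \bigcup_(s in S) [set` F s].
Proof.
move=> hE SE ES.
have : forall s, exists l : seq X, S s ->
    (forall e, e \in l -> E e) /\ span [set` l] s.
  move=> s; have [Ss|nSs] := pselect (S s); last by exists [::].
  have [l [c [lE ->]]] := SE _ Ss.
  by exists l => _; split => //; exists l, c; split.
move=> /choice [F hF]; exists F; split.
  by move=> s Ss; case: (hF s Ss).
pose G := \bigcup_(s in S) [set` F s].
have GE : G `<=` E by move=> e [s Ss]; case: (hF s Ss) => + _; apply.
have SG : S `<=` span G.
  move=> s Ss; case: (hF s Ss) => _; apply: span_mono.
  by move=> e Fe; exists s.
move=> e Ee; apply: contrapT => nGe.
apply: (notin_span hE GE Ee nGe).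
by apply: (span_min (subspace_span G) SG); apply: ES.
Qed.
Lemma indep_union (Fam : set (set X)) : total_on Fam subset ->
  (forall A, Fam A -> lin_indep A) -> lin_indep (\bigcup_(A in Fam) A).
Proof.
move=> tot hF.
have cl : forall s : seq X, (forall e, e \in s -> (\bigcup_(A in Fam) A) e) ->
    s = [::] \/ exists2 A, Fam A & forall e, e \in s -> A e.
  elim=> [|x s IH] hs; first by left.
  right; have [A FA Ax] := hs x (mem_head _ _).
  case: (IH (fun e es => hs e (@mem_behead _ (x :: s) e es))) => [->|[B FB hB]].
    by exists A => // e; rewrite inE => /eqP ->.
  have [AB|BA] := tot _ _ FA FB.
    exists B => // e; rewrite inE => /orP [/eqP ->|/hB] //.
    exact: AB.
  exists A => // e; rewrite inE => /orP [/eqP ->|/hB] //.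
  exact: BA.
move=> s c us sU h0 e es.
case: (cl s sU) => [s0|[A FA hA]]; first by move: es; rewrite s0.
exact: (hF A FA s c us hA h0 e es).
Qed.
End Lin.


Local Open Scope ring_scope.
Section T.
Variables (K : numFieldType) (X : topologicalLmodType K).
Lemma line_cont (y0 z : X) : {for (0 : K^o), continuous (fun t : K^o => y0 + t *: z)}.
Proof.
apply: (@continuous_comp K^o (X * X)%type X (fun t => (y0, t *: z))
  (fun x => x.1 + x.2)); last exact: add_continuous.
apply: (@cvg_pair _ _ _ (nbhs (0 : K^o))); first exact: cvg_cst.
rewrite /=.
apply: (@continuous_comp K^o (K^o * X)%type X (fun t => (t, z))
  (fun x => x.1 *: x.2)); last exact: scale_continuous.
apply: (@cvg_pair _ _ _ (nbhs (0 : K^o)) (nbhs (0 : K^o)) (nbhs z)).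
- exact: cvg_id.
- exact: cvg_cst.
Qed.

Lemma open_line (O : set X) y0 z : open O -> O y0 ->
  exists t : K, t != 0 /\ O (y0 + t *: z).
Proof.
move=> oO Oy0.
have : nbhs (y0 + (0 : K^o) *: z) O.
  by rewrite scale0r addr0; apply: open_nbhs_nbhs; split.
move=> /line_cont /nbhs_ballP [e /= e0 he].
exists (e / 2); split; first by rewrite mulf_neq0 // ?gt_eqF.
apply: (he (e / 2)).
rewrite -ball_normE /ball_ /= sub0r normrN gtr0_norm ?divr_gt0 //.
by rewrite ltr_pdivrMr // ltr_pMr // ltr1n.
Qed.
End T.


Local Open Scope ring_scope.

Lemma tle_image T U (h : T -> U) (A : set T) : tle (h @` A) T.
Proof.
have : forall y : h @` A, exists t, h t = val y.
  by move=> [y /= /set_mem [t _ e]]; exists t.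
move=> /choice [g hg]; exists g => y y' e.
by apply: val_inj; rewrite -hg -hg e.
Qed.

Section Core.
Variables (K : numFieldType) (X : topologicalLmodType K).

Lemma core (I : Type) (Y EY EW : set X) :
  tle nat I -> weight_le X [set: I] ->
  dense Y -> subspace Y -> EY `<=` Y -> lin_indep EY -> span EY = Y -> tle I EY ->
  EW `<=` Y -> lin_indep EW -> ~ tle I EW -> tle EW I ->
  exists Yk : I -> set X,
    (forall k, [/\ dense (Yk k), dim_subspace (Yk k) [set: I],
                  span EW `<=` Yk k & Yk k `<=` Y]) /\
    (forall k1 k2, k1 <> k2 -> Yk k1 `&` Yk k2 = span EW).
Proof.
move=> hI [B [hB hBI]] dY sY EYY iEY spY hIEY EWY iEW nIEW hEWI.
have [g gi] : tle B I.
  by apply: (tle_trans (proj2 (tle_set2 _ _) hBI)); apply: tle_subT.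
have : forall j : I, exists U : set X, [/\ open U, U !=set0 &
    forall V (hV : V \in B), V !=set0 -> g (SigSub hV) = j -> U = V].
  move=> j.
  have [[V [hV [V0 gV]]]|nV] :=
    pselect (exists V (hV : V \in B), V !=set0 /\ g (SigSub hV) = j).
    exists V; split => //; first by apply: (proj1 hB); apply: set_mem hV.
    move=> V' hV' _ gV'.
    have : SigSub hV = SigSub hV' :> B by apply: gi; rewrite gV gV'.
    by move=> /(congr1 val).
  exists setT; split => //; first exact: openT.
    by exists 0.
  by move=> V hV V0 gV; exfalso; apply: nV; exists V, hV.
move=> /choice [Op hOp].
have Op_open j : open (Op j) by case: (hOp j).
have Op_ne j : Op j !=set0 by case: (hOp j).
have Op_cov U : B U -> U !=set0 -> exists j, Op j = U.
  move=> BU U0; exists (g (SigSub (mem_set BU))).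
  by case: (hOp (g (SigSub (mem_set BU)))) => _ _ h; exact: (h U (mem_set BU) U0 erefl).
have [R [D [Rtot Ranti Rmin hID [Dsmall Ddown]]]] := good_order I.
have [pi [pinv piK piK']] : exists pi : D -> (I * I)%type, bijective pi.
  apply: tle_CB.
    apply: (tle_trans (tle_subT D)).
    by exists (fun i => (i, i)) => x y [].
  exact: (tle_trans (hessenberg hI) hID).
pose pr (d : I) : (I * I)%type := match pselect (D d) with
  | left h => pi (SigSub (mem_set h)) | right _ => (d, d) end.
pose rng (Gr : set (I * X)) := [set v | exists d, Gr (d, v)].
pose P (Gr : set (I * X)) :=
  [/\ (forall d v v', Gr (d, v) -> Gr (d, v') -> v = v'),
      (forall d d' v, Gr (d, v) -> Gr (d', v) -> d = d'),
      (forall d v, Gr (d, v) -> [/\ D d, Op (pr d).2 v & Y v]),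
      (forall d v q, Gr (d, v) -> R q d -> exists w, Gr (q, w)) &
      lin_indep (EW `|` rng Gr)].
have [Gr [[Gf Gi Gv Gd Gind] Gmax]] : exists A, P A /\ forall B, A `<` B -> ~ P B.
  apply: Zorn_bigcup => F FP Ftot; split.
  - move=> d v v' [G1 FG1 G1ab] [G2 FG2 G2ab'].
    have [G12|G21] := Ftot _ _ FG1 FG2.
      by case: (FP _ FG2) => h _ _ _ _; apply: h (G12 _ G1ab) G2ab'.
    by case: (FP _ FG1) => h _ _ _ _; apply: h G1ab (G21 _ G2ab').
  - move=> d d' v [G1 FG1 G1ab] [G2 FG2 G2ab'].
    have [G12|G21] := Ftot _ _ FG1 FG2.
      by case: (FP _ FG2) => _ h _ _ _; apply: h (G12 _ G1ab) G2ab'.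
    by case: (FP _ FG1) => _ h _ _ _; apply: h G1ab (G21 _ G2ab').
  - by move=> d v [G1 FG1 h]; case: (FP _ FG1) => _ _ hv _ _; apply: hv.
  - move=> d v q [G1 FG1 h] Rqd; case: (FP _ FG1) => _ _ _ hd _.
    by have [w Gw] := hd _ _ _ h Rqd; exists w; exists G1.
  - pose Fam := [set A | A = EW \/ exists2 G, F G & A = EW `|` rng G].
    apply: (lin_indep_sub (B := \bigcup_(A in Fam) A)).
      move=> x [EWx|[d [G1 FG1 h]]]; first by exists EW => //; left.
      by exists (EW `|` rng G1); [right; exists G1|right; exists d].
    apply: indep_union.
      move=> A1 A2 [->|[G1 FG1 ->]] [->|[G2 FG2 ->]].
      - by left.
      - by left => x; left.
      - by right => x; left.
      - have [G12|G21] := Ftot _ _ FG1 FG2.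
          by left => x [?|[d /G12 ?]]; [left|right; exists d].
        by right => x [?|[d /G21 ?]]; [left|right; exists d].
    by move=> A [->|[G1 FG1 ->]] //; case: (FP _ FG1).
have Gtot : forall d, D d -> exists v, Gr (d, v).
  apply: contrapT => /existsNP [p0 /not_implyP [Dp0 np0]].
  pose A := [set d | D d /\ ~ exists v, Gr (d, v)].
  have [p [Dp np] pmin] := Rmin A (ex_intro _ p0 (conj Dp0 np0)).
  have domE q : (exists v, Gr (q, v)) <-> R q p /\ q <> p.
    split.
      move=> [v Gqv]; have [Dq _ _] := Gv _ _ Gqv.
      case: (Rtot q p) => Rqp.
        by split => // qp; apply: np; rewrite -qp; exists v.
      by exfalso; apply: np; apply: Gd _ _ _ Gqv Rqp.
    move=> [Rqp qp]; apply: contrapT => nq.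
    apply: qp; apply: Ranti => //; apply: pmin; split => //.
    exact: Ddown _ _ Dp Rqp.
  pose S := EW `|` rng Gr.
  have SY : S `<=` Y.
    by move=> x [/EWY //|[d /Gv [_ _ ?]]].
  have [z Yz nz] : exists2 z, Y z & ~ span S z.
    apply: contrapT => hz.
    have EYS : EY `<=` span S.
      move=> e /EYY Ye; apply: contrapT => ns; apply: hz; by exists e.
    have SEY : S `<=` span EY by rewrite spY.
      have [F [_ cov]] := basis_cover iEY SEY EYS.
      apply: (@key_small _ _ _ _ EY S EW (rng Gr) F hI nIEW (Dsmall p Dp)
      (tle_refl _) _ (@subset_refl _ S) hIEY cov).
    have : forall v : rng Gr, exists q : [set x | R x p /\ x <> p],
        Gr (val q, val v).
      move=> [v /= /set_mem [q Gqv]].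
      have Hq : [set x | R x p /\ x <> p] q by apply/domE; exists v.
      by exists (SigSub (mem_set Hq)).
    move=> /choice [h hh]; exists h => v v' e.
    by apply: val_inj; apply: (Gf _ _ _ (hh v)); rewrite e; apply: hh.
  have : (Op (pr p).2 `&` Y) !=set0 by apply: dY; [apply: Op_ne|apply: Op_open].
  move=> [y0 [Oy0 Yy0]].
  have [v [Ov Yv nv]] : exists v, [/\ Op (pr p).2 v, Y v & ~ span S v].
    have [sy0|nsy0] := pselect (span S y0); last by exists y0.
    have [t [t0 Ot]] := open_line z (Op_open (pr p).2) Oy0.
    exists (y0 + t *: z); split => //.
      by case: sY => _ [sD sZ]; apply: sD => //; apply: sZ.
    move=> sv; apply: nz.
    have : span S (t *: z).
      have -> : t *: z = (y0 + t *: z) + (-1) *: y0.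
        by rewrite scaleN1r addrC addKr.
      exact: spanD sv (spanZ _ sy0).
    by move=> /(spanZ t^-1); rewrite scalerA mulVf // scale1r.
  apply: (Gmax (Gr `|` [set (p, v)])).
    split; first by move=> ?; left.
    move=> /(_ (p, v) (or_intror erefl)) Gpv; apply: np; by exists v.
  split.
  - move=> d w w' [h|/= [e1 e2]] [h'|/= [e1' e2']].
    + exact: Gf h h'.
    + by exfalso; apply: np; exists w; rewrite -e1'.
    + by exfalso; apply: np; exists w'; rewrite -e1.
    + by rewrite e2 e2'.
  - move=> d d' w [h|/= [e1 e2]] [h'|/= [e1' e2']].
    + exact: Gi h h'.
    + by exfalso; apply: nv; apply: span_sub; right; exists d; rewrite -e2'.
    + by exfalso; apply: nv; apply: span_sub; right; exists d'; rewrite -e2.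
    + by rewrite e1 e1'.
  - move=> d w [h|/= [-> ->]]; first exact: Gv h.
    by split.
  - move=> d w q [h|/= [-> _]] Rqd.
      by have [w' Gw'] := Gd _ _ _ h Rqd; exists w'; left.
    have [->|qp] := pselect (q = p); first by exists v; right.
    by have [w' Gw'] := proj2 (domE q) (conj Rqd qp); exists w'; left.
  - apply: (lin_indep_sub (B := S `|` [set v])); last exact: lin_add.
    move=> x [?|[d [h|/= [_ ->]]]]; [left; left|left; right; exists d|right] => //.
have [f hf] : exists f : I -> X, forall d, D d -> Gr (d, f d).
  have : forall d, exists v, D d -> Gr (d, v).
    move=> d; have [Dd|nDd] := pselect (D d); last by exists 0.
    by have [v Gv'] := Gtot d Dd; exists v.
  by move=> /choice [f hf]; exists f.
pose vec (kj : (I * I)%type) := f (val (pinv kj)).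
have vecG kj : Gr (val (pinv kj), vec kj) by apply: hf; apply: set_mem (valP _).
have vecP kj : Op kj.2 (vec kj) /\ Y (vec kj).
  have [Dd Od Yd] := Gv _ _ (vecG kj); split => //.
  move: Od; rewrite /pr; case: pselect => // h.
  have -> : SigSub (mem_set h) = pinv kj by apply: val_inj.
  by rewrite piK'.
have vec_inj : injective vec.
  move=> a b e; have := vecG b; rewrite -e => /(Gi _ _ _ (vecG a)) /val_inj.
  by move=> /(congr1 pi); rewrite !piK'.
have indV : lin_indep (EW `|` range vec).
  apply: (lin_indep_sub _ Gind) => x [?|[kj _ <-]]; [left|right] => //.
  by exists (val (pinv kj)).
pose V k := [set vec (k, j) | j in [set: I]].
have VEW k : EW `|` V k `<=` EW `|` range vec.
  by move=> x [?|[j _ <-]]; [left|right; exists (k, j)].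
exists (fun k => span (EW `|` V k)); split.
  move=> k; split.
  - move=> O [x Ox] oO.
    have : nbhs x O by apply: open_nbhs_nbhs; split.
    move=> /(proj2 hB x) [U [BU Ux] UO].
    have [j Oj] := Op_cov U BU (ex_intro _ x Ux).
    exists (vec (k, j)); split.
      by apply: UO; rewrite -Oj; case: (vecP (k, j)).
    by apply: span_sub; right; exists j.
  - split; first exact: subspace_span.
    exists (EW `|` V k); split => //.
    + exact: span_sub.
    + exact: lin_indep_sub (VEW k) indV.
    + apply: Cantor_Bernstein; apply/tle_set2.
        apply: (tle_trans (tle_union _ _)).
        apply: (tle_trans (tle_sum hEWI (tle_image _ _))).
        apply: (tle_trans (tle_sumAA hI)).
        exact: (tle_trans (hessenberg hI) (tle_Tsub I)).
      apply: (tle_trans (tle_subT _)).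
      have Vj j : (EW `|` V k) (vec (k, j)) by right; exists j.
      exists (fun j => SigSub (mem_set (Vj j))).
      by move=> j j' /(congr1 val) /vec_inj [].
  - by apply: span_mono; left.
  - apply: span_min => // x [/EWY //|[j _ <-]].
    by case: (vecP (k, j)).
move=> k1 k2 k12; apply/seteqP; split.
  apply: subset_trans (lin_int indV (VEW k1) (VEW k2)) _.
  apply: span_mono => x [[?|[j1 _ e1]] [?|[j2 _ e2]]] //.
  by exfalso; apply: k12; move: e2; rewrite -e1 => /vec_inj [].
by move=> y hy; split; apply: (span_mono _ hy); left.
Qed.
End Core.


Local Open Scope ring_scope.

Lemma span_x (K : numFieldType) (X : lmodType K) (x : X) :
  span [set y | y = x /\ x != 0] = span [set x].
Proof.
have [x0|xn0] := eqVneq x 0; last first.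
  by congr span; apply/seteqP; split => [y [] //|y ->].
subst x.
have Z : subspace [set (0 : X)].
  split => //; split; first by move=> y z -> ->; rewrite addr0.
  by move=> k y ->; rewrite scaler0.
apply/seteqP; split => y hy.
  have -> : y = 0 by apply: (span_min Z _ hy) => z [].
  exact: span0.
have -> : y = 0 by apply: (span_min Z _ hy) => z.
exact: span0.
Qed.

Lemma lin_indep_x (K : numFieldType) (X : lmodType K) (x : X) :
  lin_indep [set y | y = x /\ x != 0].
Proof.
have i0 : lin_indep (@set0 X).
  by move=> [|a s] c _ sE //; case: (sE a); rewrite inE eqxx.
have [x0|xn0] := eqVneq x 0.
  apply: (lin_indep_sub _ i0) => y [_].
  by [].
apply: (lin_indep_sub (B := set0 `|` [set x])); first by move=> y [-> _]; right.
apply: lin_add => //; rewrite span_set0 => /eqP; exact/negP.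
Qed.

Lemma main_over (K : numFieldType) : theorem3p3_over K.
Proof.
move=> X M I infI wI.
have hI : tle nat I by apply/tle_natP.
have [n0 _] := hI; have i0 : I := n0 0%N.
have tleIT : tle I [set: I] := tle_Tsub I.
split.
  split.
    move=> hp x Mx.
    have [Y [dY [sY [EY [EYY iEY spY cEY]]] Yx YM]] := hp x Mx.
    have hIEY : tle I EY.
      apply: (tle_trans tleIT); apply/tle_set2.
      by move: cEY; rewrite card_eq_le => /andP [].
    pose EW := [set y | y = x /\ x != 0].
    have EWY : EW `<=` Y by move=> y [-> _].
    have nIEW : ~ tle I EW.
      move=> /(tle_trans hI) /tle_setP /infiniteP; apply.
      by apply: sub_finite_set (finite_set1 x) => y [].
    have hEWI : tle EW I.
      by exists (fun _ => i0) => a b _; apply: val_inj;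
         case: (set_mem (valP a)) => ->; case: (set_mem (valP b)) => ->.
    have [Yk [hY hint]] := core hI wI dY sY EYY iEY spY hIEY EWY
      (@lin_indep_x _ _ x) nIEW hEWI.
    exists Yk; split.
      move=> k _; have [dk sk EWk kY] := hY k; split => //.
        by apply: EWk; rewrite span_x; apply: span_sub.
      exact: subset_trans kY YM.
    by move=> k1 k2 _ _ k12; rewrite hint // span_x.
  move=> hinf x Mx; have [Yk [hY _]] := hinf x Mx.
  by have [? ? ? ?] := hY i0 Logic.I; exists (Yk i0).
move=> J [hJI nIJ]; split.
  move=> [lin hW]; split => // W dW WM.
  have [sW [EW [EWW iEW spW cEW]]] := dW.
  have [Y [dY [sY [EY [EYY iEY spY cEY]]] WY YM]] := hW W dW WM.
  have hIEY : tle I EY.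
    apply: (tle_trans tleIT); apply/tle_set2.
    by move: cEY; rewrite card_eq_le => /andP [].
  have [hEWJ hJEW] : tle EW [set: J] /\ tle [set: J] EW.
    by move: cEW; rewrite card_eq_le => /andP [/tle_set2 ? /tle_set2 ?].
  have nIEW : ~ tle I EW.
    move=> hIEW; apply: nIJ; apply/tle_set2.
    exact: (tle_trans (tle_subT _) (tle_trans hIEW hEWJ)).
  have hEWI : tle EW I.
    apply: (tle_trans hEWJ); apply: (tle_trans (proj2 (tle_set2 _ _) hJI)).
    exact: tle_subT.
  have [Yk [hY hint]] := core hI wI dY sY EYY iEY spY hIEY
    (subset_trans EWW WY) iEW nIEW hEWI.
  exists Yk; split.
    move=> k _; have [dk sk EWk kY] := hY k; split => //.
      by rewrite -spW.
    exact: subset_trans kY YM.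
  by move=> k1 k2 _ _ k12; rewrite hint // spW.
move=> [lin hinf]; split => // W dW WM.
have [Yk [hY _]] := hinf W dW WM.
by have [? ? ? ?] := hY i0 Logic.I; exists (Yk i0).
Qed.

Theorem theorem3p3 (R : realType) :
  theorem3p3_over R /\ theorem3p3_over (complex R).
Proof. by split; apply: main_over. Qed.
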